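(* For the hop-constrained minimum spanning tree problem (HMSTP), i.e. the HSTP with $R=V$, the partial-ordering model (P-HSTP) is strictly stronger than the assignment model (A-HSTP): for every HMSTP instance $\nu_{\text{P-HSTP}}\ge\nu_{\text{A-HSTP}}$, and there exist HMSTP instances for which this inequality is strict.
   Context: HMSTP instance: a complete undirected graph $G=(V,E)$ with edge costs $c:E\to\mathbb{R}_{>0}$, a root $r\in V$, a hop limit $H\ge1$, and terminal set $R=V$. For every ordered pair $(u,v)$ of distinct nodes there is a variable $x_{u,v}$. Common $x$-constraints: (X1) $\sum_{u\neq v}x_{u,v}\le1$ for all $v\in V$; (X2) $\sum_{u\in V\setminus\{v,w\}}x_{u,v}\ge x_{v,w}$ for all $v\in V\setminus\{r\}$, $w\neq v$; (X3) $0\le x_{u,v}\le1$; (X4) $\sum_{u\neq v}x_{u,v}\ge1$ for all $v\in R\setminus\{r\}$. $\mathcal{P}^{HSTP}$: all $(x,l,g)$ (with $l_{v,i},g_{i,v}$ for $v\in V$, $i=0,\dots,H$) satisfying (X1)–(X4) and $l_{r,0}=g_{0,r}=0$; $l_{v,1}=g_{H,v}=0$ for $v\neq r$; $l_{v,i}\le l_{v,i+1}$ and $g_{i,v}+l_{v,i+1}=1$ for $v\in V$, $i=0,\dots,H-1$; $l_{u,i}+g_{i,v}\ge x_{u,v}$ for $u\neq v$, $i=0,\dots,H$; $0\le l,g\le1$. $\mathcal{A}^{HSTP}$: all $(x,y)$ (with $y_{v,i}$ for $v\in V$, $i=0,\dots,H$) satisfying (X1)–(X4) and $y_{r,0}=1$;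 $y_{r,i}=0$ for $i\ge1$; $y_{v,0}=0$ and $\sum_{i=1}^Hy_{v,i}=1$ for $v\neq r$; $y_{u,i}-y_{v,i+1}+x_{u,v}\le1$ for $u\neq v$, $i=0,\dots,H-1$; $y_{u,H}+x_{u,v}\le1$ for $u\neq v$; $0\le y\le1$. (A-HSTP) and (P-HSTP) minimize $\sum_{uv\in E}c_{uv}(x_{u,v}+x_{v,u})$ over the integral points of $\mathcal{A}^{HSTP}$ and $\mathcal{P}^{HSTP}$ respectively. $\nu_M$ is the optimal value of the LP relaxation of ILP $M$. For a minimization problem, model $A$ is strictly stronger than $B$ if $\nu_A\ge\nu_B$ on all instances and strict inequality holds for some instance. *)

(* Defs.v *)
From HB Require Import structures.
From mathcomp Require Import all_boot all_order all_algebra.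
From mathcomp Require Import boolp classical_sets reals.
Set Implicit Arguments. Unset Strict Implicit. Unset Printing Implicit Defensive.
Import Order.TTheory GRing.Theory Num.Theory.
Local Open Scope ring_scope.
Local Open Scope classical_set_scope.

(* An HMSTP instance: V = 'I_n (complete graph), root r, hop limit H >= 1,
   edge costs c u v for the edge {u,v}, read for u < v (values c u v with
   u >= v are irrelevant), required positive. Terminal set R = V. *)
Definition valid_costs (R : realType) (n : nat) (c : 'I_n -> 'I_n -> R) :=
  forall u v : 'I_n, (u < v)%N -> 0 < c u v.

Definition cost (R : realType) (n : nat) (c : 'I_n -> 'I_n -> R)
  (x : 'I_n -> 'I_n -> R) : R :=
  \sum_(u : 'I_n) \sum_(v : 'I_n | (u < v)%N) c u v * (x u v + x v u).

Definition X_constraints (R : realType) (n : nat) (r : 'I_n)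
  (x : 'I_n -> 'I_n -> R) : Prop :=
  [/\ (forall v : 'I_n, \sum_(u : 'I_n | u != v) x u v <= 1),
      (forall v w : 'I_n, v != r -> w != v ->
          x v w <= \sum_(u : 'I_n | (u != v) && (u != w)) x u v),
      (forall u v : 'I_n, u != v -> 0 <= x u v /\ x u v <= 1) &
      (forall v : 'I_n, v != r -> 1 <= \sum_(u : 'I_n | u != v) x u v)].

(* P^HSTP; l v i stands for l_{v,i} and g v i for g_{i,v}, i = 0..H *)
Definition in_P (R : realType) (n : nat) (r : 'I_n) (H : nat)
  (x : 'I_n -> 'I_n -> R) (l g : 'I_n -> nat -> R) : Prop :=
  X_constraints r x /\
  [/\ (l r 0%N = 0 /\ g r 0%N = 0),
      (forall v : 'I_n, v != r -> l v 1%N = 0 /\ g v H = 0),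
      (forall (v : 'I_n) (i : nat), (i < H)%N ->
          l v i <= l v (i.+1)%N /\ g v i + l v (i.+1)%N = 1),
      (forall (u v : 'I_n) (i : nat), u != v -> (i <= H)%N ->
          x u v <= l u i + g v i) &
      (forall (v : 'I_n) (i : nat), (i <= H)%N ->
          [/\ 0 <= l v i, l v i <= 1, 0 <= g v i & g v i <= 1])].

Definition in_A (R : realType) (n : nat) (r : 'I_n) (H : nat)
  (x : 'I_n -> 'I_n -> R) (y : 'I_n -> nat -> R) : Prop :=
  [/\ X_constraints r x,
      (y r 0%N = 1 /\ (forall i : nat, (1 <= i <= H)%N -> y r i = 0)),
      (forall v : 'I_n, v != r ->
          y v 0%N = 0 /\ \sum_(1 <= i < H.+1) y v i = 1),
      ((forall (u v : 'I_n) (i : nat), u != v -> (i < H)%N ->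
          y u i - y v (i.+1)%N + x u v <= 1) /\
       (forall u v : 'I_n, u != v -> y u H + x u v <= 1)) &
      (forall (v : 'I_n) (i : nat), (i <= H)%N -> 0 <= y v i /\ y v i <= 1)].

(* optimal values of the LP relaxations (infimum of the objective over the
   polytope; the polytope is nonempty and compact, so this is the optimum) *)
Definition nu_P (R : realType) (n : nat) (r : 'I_n) (H : nat)
  (c : 'I_n -> 'I_n -> R) : R :=
  inf [set z : R | exists x l g, in_P r H x l g /\ z = cost c x].

Definition nu_A (R : realType) (n : nat) (r : 'I_n) (H : nat)
  (c : 'I_n -> 'I_n -> R) : R :=
  inf [set z : R | exists x y, in_A r H x y /\ z = cost c x].

(* Main.v *)
Require Import Defs.
From HB Require Import structures.
From mathcomp Require Import all_boot all_order all_algebra.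
From mathcomp Require Import boolp classical_sets reals.
From mathcomp Require Import ring lra.
Import Order.TTheory GRing.Theory Num.Theory.
Local Open Scope ring_scope.

Section Construction.
Variables (R : realType) (n : nat) (r : 'I_n) (H : nat)
  (x : 'I_n -> 'I_n -> R) (l : 'I_n -> nat -> R).

Definition posp (a : R) : R := Num.max a 0.
Definition Uf (v : 'I_n) (j : nat) : R := 1 - l v j.
Definition Gf (v : 'I_n) (t : nat) : R := 1 - \sum_(t.+1 <= j < H.+1) Uf v j.
Definition LBf (yp : 'I_n -> R) (v : 'I_n) : R :=
  \big[Num.max/0]_(u | u != v) (yp u - 1 + x u v).

Fixpoint st (t : nat) : ('I_n -> R) * ('I_n -> R) :=
  match t with
  | 0 => ((fun v => if v == r then 1 else 0), (fun _ => 0))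
  | t'.+1 =>
     let yn := fun v => if v == r then 0
                        else Num.max (LBf (st t').1 v) (Gf v t'.+1 - (st t').2 v) in
     (yn, fun v => (st t').2 v + yn v)
  end.

Definition yf (v : 'I_n) (t : nat) : R := (st t).1 v.
Definition Sf (v : 'I_n) (t : nat) : R := (st t).2 v.
Definition LBt (v : 'I_n) (t : nat) : R := LBf (fun u => yf u t) v.
Definition Af (v : 'I_n) (t : nat) : R := \sum_(0 <= j < t) LBt v j.
Definition Tf (u : 'I_n) (t : nat) : R := \sum_(0 <= j < t) yf u j.

Lemma yf0 v : yf v 0 = if v == r then 1 else 0. Proof. by []. Qed.
Lemma Sf0 v : Sf v 0 = 0. Proof. by []. Qed.
Lemma yfS v t : yf v t.+1 = if v == r then 0
   else Num.max (LBt v t) (Gf v t.+1 - Sf v t).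
Proof. by []. Qed.
Lemma SfS v t : Sf v t.+1 = Sf v t + yf v t.+1.
Proof. by []. Qed.

Lemma AfS v t : Af v t.+1 = Af v t + LBt v t.
Proof. by rewrite /Af big_nat_recr. Qed.
Lemma TfS u t : Tf u t.+1 = Tf u t + yf u t.
Proof. by rewrite /Tf big_nat_recr. Qed.

Lemma Sf_sum v t : Sf v t = \sum_(1 <= j < t.+1) yf v j.
Proof.
elim: t => [|t IH]; first by rewrite Sf0 big_geq.
by rewrite SfS IH [in RHS]big_nat_recr.
Qed.

Lemma yf_root t : yf r t.+1 = 0. Proof. by rewrite yfS eqxx. Qed.

Lemma yf_rootP t : (0 < t)%N -> yf r t = 0.
Proof. by case: t => // t _; rewrite yf_root. Qed.

Lemma Tf_root t : Tf r t.+1 = 1.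
Proof.
elim: t => [|t IH].
  by rewrite /Tf big_nat1 yf0 eqxx.
by rewrite TfS IH yf_root addr0.
Qed.

Lemma Tf_nonroot u t : u != r -> Tf u t.+1 = Sf u t.
Proof.
move=> ur; elim: t => [|t IH]; first by rewrite /Tf big_nat1 yf0 (negbTE ur).
by rewrite TfS IH SfS.
Qed.

Lemma LB_ge0 yp v : 0 <= LBf yp v.
Proof. by rewrite /LBf; elim/big_rec: _ => // i a _ ha; rewrite le_max ha orbT. Qed.

Lemma LB_le yp v b : 0 <= b -> (forall u, u != v -> yp u - 1 + x u v <= b) -> LBf yp v <= b.
Proof. by move=> b0 hb; apply: bigmax_le. Qed.

Lemma LB_ge yp v u : u != v -> yp u - 1 + x u v <= LBf yp v.
Proof. by move=> uv; apply: le_bigmax_cond. Qed.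

Lemma LB_le_sum yp v : LBf yp v <= \sum_(u | u != v) posp (yp u - 1 + x u v).
Proof.
apply: LB_le; first by apply: sumr_ge0 => u _; rewrite /posp le_max lexx orbT.
move=> u uv; rewrite (bigD1 u) //=.
have : 0 <= \sum_(i | (i != v) && (i != u)) posp (yp i - 1 + x i v).
  by apply: sumr_ge0 => i _; rewrite /posp le_max lexx orbT.
have : yp u - 1 + x u v <= posp (yp u - 1 + x u v) by rewrite /posp le_max lexx.
lra.
Qed.


Lemma posp_ge0 a : 0 <= posp a. Proof. by rewrite /posp le_max lexx orbT. Qed.
Lemma posp_ge a : a <= posp a. Proof. by rewrite /posp le_max lexx. Qed.
Lemma posp_id a : 0 <= a -> posp a = a.
Proof. by move=> a0; rewrite /posp max_l. Qed.

Lemma posp_step a b z : 0 <= b -> a + b <= 1 -> z <= 1 ->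
  posp (b - 1 + z) + posp (z - (a + b)) <= posp (z - a).
Proof.
move=> b0 ab z1; rewrite /posp.
case: (leP (b - 1 + z) 0) => h1; case: (leP (z - (a + b)) 0) => h2;
  case: (leP (z - a) 0) => h3; lra.
Qed.

Lemma aux_c (s a g g' lb u : R) : s <= Num.max a g -> g + u = g' -> lb <= u ->
  s + Num.max lb (g' - s) <= Num.max (a + lb) g'.
Proof.
move=> h1 h2 h3.
case: (leP a g) h1 => h4 h1;
  case: (leP lb (g' - s)) => h5; case: (leP (a + lb) g') => h6; lra.
Qed.

Hypothesis HH : (1 <= H)%N.
Hypothesis Hl1 : forall v, v != r -> l v 1 = 0.
Hypothesis Hl01 : forall v i, (i <= H)%N -> 0 <= l v i /\ l v i <= 1.
Hypothesis Harc : forall u v i, u != r -> v != r -> u != v -> (i < H)%N ->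
  x u v <= l u i + 1 - l v i.+1.
Hypothesis Hcap : forall u v, u != r -> v != r -> u != v -> x u v <= l u H.
Hypothesis Hx01 : forall u v, u != v -> 0 <= x u v /\ x u v <= 1.
Hypothesis Hin : forall v, \sum_(u | u != v) x u v <= 1.

Lemma U_ge0 v j : (j <= H)%N -> 0 <= Uf v j.
Proof. by move=> jH; have [_ h] := Hl01 v j jH; rewrite /Uf; lra. Qed.

Lemma sumU_ge0 v t : 0 <= \sum_(t.+1 <= j < H.+1) Uf v j.
Proof.
rewrite big_nat_cond; apply: sumr_ge0 => j /andP[/andP[_ jH] _].
by apply: U_ge0.
Qed.

Lemma G_le1 v t : Gf v t <= 1.
Proof. by have := sumU_ge0 v t; rewrite /Gf; lra. Qed.

Lemma G_H v : Gf v H = 1.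
Proof. by rewrite /Gf big_geq // subr0. Qed.

Lemma G_step v t : (t < H)%N -> Gf v t.+1 = Gf v t + Uf v t.+1.
Proof. by move=> tH; rewrite /Gf (@big_ltn _ _ _ t.+1) //; ring. Qed.

Lemma G_0 v : v != r -> Gf v 0 <= 0.
Proof.
move=> vr; rewrite /Gf (@big_ltn _ _ _ 1) // /Uf Hl1 //.
have := sumU_ge0 v 1; lra.
Qed.

Definition Inv t := forall v, v != r ->
  [/\ Sf v t <= 1, Gf v t <= Sf v t, Sf v t <= Num.max (Af v t) (Gf v t),
      Af v t + \sum_(u | u != v) posp (x u v - Tf u t) <= 1 &
      (0 < t)%N -> 0 <= yf v t /\ yf v t <= Uf v t].

Lemma inv_all t : (t <= H)%N -> Inv t.
Proof.
elim: t => [|t IH] tH.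
  move=> v vr; rewrite Sf0 /Af big_geq //; split => //.
  - exact: G_0.
  - by rewrite le_max lexx.
  - rewrite add0r (eq_bigr (fun u => x u v)); first exact: Hin.
    by move=> u uv; rewrite /Tf big_geq // subr0 posp_id //; case: (Hx01 _ _ uv).
have IHt := IH (ltnW tH).
move=> v vr.
have tH' : (t < H)%N by [].
have hLB0 : 0 <= LBt v t by apply: LB_ge0.
have hyu0 : forall u, 0 <= yf u t.
  move=> u; have [t0|t0] := posnP t.
    by rewrite t0 yf0; case: (u == r).
  case: (eqVneq u r) => [->|ur]; first by rewrite yf_rootP.
  by case: (IHt u ur) => _ _ _ _ /(_ t0) [].
have hTu : forall u, Tf u t.+1 <= 1.
  move=> u; case: (eqVneq u r) => [->|ur]; first by rewrite Tf_root.
  by rewrite Tf_nonroot //; case: (IHt u ur).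
have hLBU : LBt v t <= Uf v t.+1.
  apply: LB_le; first exact: U_ge0.
  move=> u uv; have [_ x1] := Hx01 _ _ uv.
  have [t0|t0] := posnP t.
    rewrite t0 /Uf Hl1 // yf0; case: (u == r); lra.
  case: (eqVneq u r) => [eur|ur].
    by rewrite eur yf_rootP //; rewrite eur in x1; have := U_ge0 v _ tH; lra.
  have [_ _ _ _ /(_ t0) [_ hy]] := IHt u ur.
  have := @Harc u v t ur vr uv tH'; rewrite /Uf in hy *; lra.
have [hS1 hGS hSA hAT _] := IHt v vr.
have hG := G_step v t tH'.
have hy : yf v t.+1 = Num.max (LBt v t) (Gf v t.+1 - Sf v t) by rewrite yfS (negbTE vr).
have hSS : Sf v t.+1 = Sf v t + Num.max (LBt v t) (Gf v t.+1 - Sf v t) by rewrite SfS hy.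
have hc : Sf v t.+1 <= Num.max (Af v t.+1) (Gf v t.+1).
  by rewrite hSS AfS; apply: (aux_c _ _ _ _ _ _ hSA _ hLBU); rewrite hG.
have hd : Af v t.+1 + \sum_(u | u != v) posp (x u v - Tf u t.+1) <= 1.
  rewrite AfS.
  have h1 := LB_le_sum (fun u => yf u t) v.
  have h2 : \sum_(u | u != v) posp (yf u t - 1 + x u v) +
            \sum_(u | u != v) posp (x u v - Tf u t.+1) <=
            \sum_(u | u != v) posp (x u v - Tf u t).
    rewrite -big_split /=; apply: ler_sum => u uv.
    rewrite TfS; apply: posp_step => //; first by rewrite -TfS.
    by case: (Hx01 _ _ uv).
  rewrite /LBt in hAT *; lra.
have hA1 : Af v t.+1 <= 1.
  have : 0 <= \sum_(u | u != v) posp (x u v - Tf u t.+1).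
    by apply: sumr_ge0 => u _; apply: posp_ge0.
  lra.
split => //.
- apply: (le_trans hc); rewrite ge_max hA1; exact: G_le1.
- rewrite hSS; have : Gf v t.+1 - Sf v t <= Num.max (LBt v t) (Gf v t.+1 - Sf v t).
    by rewrite le_max lexx orbT.
  lra.
- move=> _; rewrite hy; split; first by rewrite le_max hLB0.
  rewrite ge_max hLBU /=; lra.
Qed.

Lemma S_H v : v != r -> Sf v H = 1.
Proof.
move=> vr; have [h1 h2 _ _ _] := inv_all H (leqnn H) v vr.
by move: h2; rewrite G_H => h2; apply/eqP; rewrite eq_le h1 h2.
Qed.

Lemma y_sum v : v != r -> \sum_(1 <= i < H.+1) yf v i = 1.
Proof. by move=> vr; rewrite -Sf_sum S_H. Qed.

Lemma y_bnd v t : (t <= H)%N -> 0 <= yf v t /\ yf v t <= 1.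
Proof.
move=> tH; have [t0|t0] := posnP t.
  by rewrite t0 yf0; case: (v == r); split => //; lra.
case: (eqVneq v r) => [->|vr]; first by rewrite yf_rootP //; lra.
have [_ _ _ _ /(_ t0) [h1 h2]] := inv_all t tH v vr.
have [h3 _] := Hl01 v t tH.
by rewrite /Uf in h2; split => //; lra.
Qed.

Lemma y_U v t : v != r -> (0 < t)%N -> (t <= H)%N -> yf v t <= Uf v t.
Proof. by move=> vr t0 tH; have [_ _ _ _ /(_ t0) []] := inv_all t tH v vr. Qed.

Lemma y_arc u v i : v != r -> u != v -> yf u i - yf v i.+1 + x u v <= 1.
Proof.
move=> vr uv; rewrite yfS (negbTE vr).
have h1 := LB_ge (fun w => yf w i) _ _ uv.
have : LBt v i <= Num.max (LBt v i) (Gf v i.+1 - Sf v i) by rewrite le_max lexx.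
rewrite /LBt in h1 *; lra.
Qed.

End Construction.

Lemma P_to_A (R : realType) (n : nat) (r : 'I_n) (H : nat)
  (x : 'I_n -> 'I_n -> R) (l g : 'I_n -> nat -> R) :
  (1 <= H)%N -> in_P r H x l g -> in_A r H x (@yf R n r H x l).
Proof.
move=> HH [[X1 X2 X3 X4] [[lr0 gr0] Hnr Hmono Harc0 Hb]].
have Hl1 : forall v, v != r -> l v 1 = 0 by move=> v vr; case: (Hnr v vr).
have Hl01 : forall v i, (i <= H)%N -> 0 <= l v i /\ l v i <= 1.
  by move=> v i iH; case: (Hb v i iH).
have Harc : forall u v i, u != r -> v != r -> u != v -> (i < H)%N ->
    x u v <= l u i + 1 - l v i.+1.
  move=> u v i ur vr uv iH; have := Harc0 u v i uv (ltnW iH).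
  have [_ e] := Hmono v i iH; lra.
have Hcap : forall u v, u != r -> v != r -> u != v -> x u v <= l u H.
  move=> u v ur vr uv; have := Harc0 u v H uv (leqnn H).
  have [_ ->] := Hnr v vr; lra.
have Hxr : forall u, u != r -> x u r <= 0.
  move=> u ur; have := Harc0 u r 0 ur (leq0n H); rewrite gr0.
  have [h _] := Hmono u 0 HH; rewrite Hl1 // in h; lra.
have Hx01 : forall u v, u != v -> 0 <= x u v /\ x u v <= 1 by [].
have ybnd := y_bnd _ _ _ _ _ _ HH Hl1 Hl01 Harc Hx01 X1.
split => //.
- split; first by rewrite yf0 eqxx.
  by move=> i /andP[i0 _]; rewrite yf_rootP.
- move=> v vr; split; first by rewrite yf0 (negbTE vr).
  exact: (y_sum _ _ _ _ _ _ HH Hl1 Hl01 Harc Hx01 X1).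
- split.
    move=> u v i uv iH; case: (eqVneq v r) => [evr|vr].
      rewrite evr yf_root; rewrite evr in uv.
      have := Hxr u uv; have [_ h] := ybnd u i (ltnW iH); lra.
    exact: y_arc.
  move=> u v uv; case: (eqVneq u r) => [eur|ur].
    rewrite eur in uv *; rewrite yf_rootP //; have [_ h] := X3 _ _ uv; lra.
  case: (eqVneq v r) => [evr|vr].
    rewrite evr; have := Hxr u ur; have [_ h] := ybnd u H (leqnn H); lra.
  have := y_U _ _ _ _ _ _ HH Hl1 Hl01 Harc Hx01 X1 _ _ ur HH (leqnn H).
  have := Hcap u v ur vr uv; rewrite /Uf; lra.
Qed.

Section Star.
Variables (R : realType) (n : nat) (r : 'I_n) (H : nat).
Hypothesis HH : (1 <= H)%N.

Definition xs (u v : 'I_n) : R := if (u == r) && (v != r) then 1 else 0.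
Definition ls (v : 'I_n) (i : nat) : R := if (v == r) && (i != 0%N) then 1 else 0.
Definition gs (v : 'I_n) (i : nat) : R := if (i < H)%N then 1 - ls v i.+1 else 0.

Lemma ls01 v i : 0 <= ls v i /\ ls v i <= 1.
Proof. by rewrite /ls; case: ifP => _; split => //; lra. Qed.
Lemma gs01 v i : 0 <= gs v i /\ gs v i <= 1.
Proof. by rewrite /gs; case: ifP => _; have := ls01 v i.+1; split => //; lra. Qed.
Lemma xs01 u v : 0 <= xs u v /\ xs u v <= 1.
Proof. by rewrite /xs; case: ifP => _; split => //; lra. Qed.

Lemma sum_xs v : \sum_(u | u != v) xs u v = if v == r then 0 else 1.
Proof.
case: (eqVneq v r) => [->|vr].
  by apply: big1 => u _; rewrite /xs eqxx andbF.
rewrite (bigD1 r) /=; last by rewrite eq_sym.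
rewrite {1}/xs eqxx vr /= big1 ?addr0 // => u /andP[_ ur].
by rewrite /xs (negbTE ur).
Qed.

Lemma star_P : in_P r H xs ls gs.
Proof.
split.
  split.
  - by move=> v; rewrite sum_xs; case: (v == r) => //; lra.
  - move=> v w vr wv; rewrite {1}/xs (negbTE vr) /=.
    by apply: sumr_ge0 => u _; case: (xs01 u v).
  - by move=> u v _; apply: xs01.
  - by move=> v vr; rewrite sum_xs (negbTE vr).
split.
- by rewrite /ls /gs eqxx /= HH /ls eqxx /=; split => //; lra.
- by move=> v vr; rewrite /ls /gs (negbTE vr) ltnn.
- move=> v i iH; rewrite /gs iH; split; last by ring.
  rewrite /ls; case: (v == r) => /=; last by [].
  by case: (i != 0%N) => //; lra.
- move=> u v i uv iH; rewrite /xs.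
  case: (eqVneq u r) => [eur|ur] /=; last first.
    by have := ls01 u i; have := gs01 v i; lra.
  case: (eqVneq v r) => [evr|vr] /=.
    by have := ls01 u i; have := gs01 v i; lra.
  have [i0|i0] := posnP i.
    by rewrite i0 /gs HH /ls (negbTE vr) eur eqxx /=; lra.
  rewrite /ls eur eqxx /= -lt0n i0; have := gs01 v i; lra.
- move=> v i _; have := ls01 v i; have := gs01 v i; move=> [? ?] [? ?]; split => //.
Qed.

End Star.

Lemma cost_ge0 (R : realType) (n : nat) (c x : 'I_n -> 'I_n -> R) :
  valid_costs c -> (forall u v, u != v -> 0 <= x u v) -> 0 <= cost c x.
Proof.
move=> hc hx; apply: sumr_ge0 => u _; apply: sumr_ge0 => v uv.
have uv' : u != v by rewrite neq_ltn uv.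
have vu' : v != u by rewrite eq_sym.
apply: mulr_ge0; first exact: ltW (hc _ _ uv).
by apply: addr_ge0; [apply: hx | apply: hx].
Qed.

Lemma part1 (R : realType) (n : nat) (r : 'I_n) (H : nat) (c : 'I_n -> 'I_n -> R) :
  (1 <= H)%N -> valid_costs c -> nu_A r H c <= nu_P r H c.
Proof.
move=> HH hc; rewrite /nu_P; apply: lb_le_inf.
  exists (cost c (@xs R n r)); exists (@xs R n r), (@ls R n r), (@gs R n r H).
  by split => //; apply: star_P.
move=> z [x [l [g [hP ->]]]]; apply: ge_inf.
  exists 0 => z' [x' [y' [[[_ _ X3 _] _ _ _ _] ->]]].
  by apply: cost_ge0 => // u v uv; case: (X3 u v uv).
by exists x, (@yf R n r H x l); split => //; apply: P_to_A hP.
Qed.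

Section Ex.
Variable R : realType.
Definition o0 : 'I_4 := @Ordinal 4 0 isT.
Definition o1 : 'I_4 := @Ordinal 4 1 isT.
Definition o2 : 'I_4 := @Ordinal 4 2 isT.
Definition o3 : 'I_4 := @Ordinal 4 3 isT.

Lemma sum4 (f : 'I_4 -> R) : \sum_(i < 4) f i = f o0 + f o1 + f o2 + f o3.
Proof.
rewrite !big_ord_recr big_ord0 /= add0r.
by congr (_ + _ + _ + _); congr f; apply: val_inj.
Qed.

Lemma sum4P (f : 'I_4 -> R) (P : pred 'I_4) : \sum_(i | P i) f i =
  (if P o0 then f o0 else 0) + (if P o1 then f o1 else 0) +
  (if P o2 then f o2 else 0) + (if P o3 then f o3 else 0).
Proof. by rewrite big_mkcond sum4. Qed.

Lemma ord4P (P : 'I_4 -> Prop) : P o0 -> P o1 -> P o2 -> P o3 -> forall u, P u.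
Proof.
move=> h0 h1 h2 h3 [[|[|[|[|m]]]] hm] //.
- by rewrite (_ : Ordinal hm = o0) //; apply: val_inj.
- by rewrite (_ : Ordinal hm = o1) //; apply: val_inj.
- by rewrite (_ : Ordinal hm = o2) //; apply: val_inj.
- by rewrite (_ : Ordinal hm = o3) //; apply: val_inj.
Qed.

Definition c4 (u v : 'I_4) : R :=
  match val u, val v with
  | 0, 1 => 3 | 0, 2 => 1 | 0, 3 => 4 | 1, 2 => 1 | 1, 3 => 2 | 2, 3 => 3
  | _, _ => 1 end.

Definition xa (u v : 'I_4) : R :=
  match val u, val v with
  | 0, 2 => 2/3 | 1, 2 => 1/3 | 1, 3 => 2/3 | 2, 1 => 2/3 | 2, 3 => 1/3 | 3, 1 => 1/3
  | _, _ => 0 end.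

Definition ya (v : 'I_4) (i : nat) : R :=
  match val v, i with
  | 0, 0 => 1 | 1, 1 => 2/3 | 1, 2 => 1/3 | 2, 1 => 2/3 | 2, 2 => 1/3
  | 3, 1 => 1/3 | 3, 2 => 2/3 | _, _ => 0 end.


Lemma cost_a : cost c4 xa = 14/3.
Proof.
rewrite /cost sum4 !sum4P /= /c4 /xa /=. lra.
Qed.


Lemma A_point : in_A o0 2 xa ya.
Proof.
split.
- split.
  + apply: ord4P; rewrite sum4P /= /xa /=; lra.
  + apply: ord4P; apply: ord4P; move=> h1 h2; rewrite ?eqxx in h1 h2 |- * => //;
      rewrite sum4P /= /xa /=; lra.
  + apply: ord4P; apply: ord4P; move=> h1; rewrite /xa /=; split; lra.
  + apply: ord4P; move=> h1; rewrite ?eqxx in h1 => //; rewrite sum4P /= /xa /=; lra.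
- by split => // [[|[|[|i]]]].
- apply: ord4P; move=> h1; rewrite ?eqxx in h1 => //; split => //;
    rewrite big_ltn // big_nat1 /ya /=; lra.
- split.
  + apply: ord4P; apply: ord4P; move=> [|[|i]] h1 h2 //; rewrite /xa /ya /=; lra.
  + apply: ord4P; apply: ord4P; move=> h1; rewrite /xa /ya /=; lra.
- apply: ord4P; move=> [|[|[|i]]] h //; rewrite /ya /=; split; lra.
Qed.


Lemma P_lb x l g : in_P o0 2 x l g -> 5 <= cost c4 x.
Proof.
move=> [[X1 X2 X3 X4] [[lr0 gr0] Hnr Hmono Harc0 Hb]].
have i1 := X4 o1 isT; have i2 := X4 o2 isT; have i3 := X4 o3 isT.
rewrite !sum4P /= in i1 i2 i3.
have [p01 _] := X3 o0 o1 isT; have [p02 _] := X3 o0 o2 isT; have [p03 _] := X3 o0 o3 isT.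
have [p10 _] := X3 o1 o0 isT; have [p12 _] := X3 o1 o2 isT; have [p13 _] := X3 o1 o3 isT.
have [p20 _] := X3 o2 o0 isT; have [p21 _] := X3 o2 o1 isT; have [p23 _] := X3 o2 o3 isT.
have [p30 _] := X3 o3 o0 isT; have [p31 _] := X3 o3 o1 isT; have [p32 _] := X3 o3 o2 isT.
have a1 := Harc0 o2 o1 1%N isT isT; have a2 := Harc0 o1 o3 2%N isT isT.
have a3 := Harc0 o2 o3 1%N isT isT; have a4 := Harc0 o3 o1 2%N isT isT.
have [e1 _] := Hnr o2 isT; have [_ e2] := Hnr o3 isT; have [_ e3] := Hnr o1 isT.
have [_ m1] := Hmono o1 1%N isT; have [_ m3] := Hmono o3 1%N isT.
rewrite /cost sum4 !sum4P /= /c4 /=.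
lra.
Qed.

End Ex.

Lemma part2 (R : realType) :
  exists (n : nat) (r : 'I_n) (H : nat) (c : 'I_n -> 'I_n -> R),
      [/\ (1 <= H)%N, valid_costs c & nu_A r H c < nu_P r H c].
Proof.
have hc : valid_costs (@c4 R).
  by rewrite /valid_costs; apply: ord4P; apply: ord4P => h //; rewrite /c4 /=; lra.
exists 4%N, (o0), 2%N, (@c4 R); split => //.
have hA : nu_A o0 2 (@c4 R) <= 14/3.
  rewrite /nu_A; have := @ge_inf R [set z : R | exists x y, in_A o0 2 x y /\ z = cost (@c4 R) x].
  move=> h; rewrite -(cost_a R); apply: h.
    exists 0 => z' [x' [y' [[[_ _ X3 _] _ _ _ _] ->]]].
    by apply: cost_ge0 => // u v uv; case: (X3 u v uv).
  by exists (@xa R), (@ya R); split => //; apply: A_point.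
have hP : 5 <= nu_P o0 2 (@c4 R).
  rewrite /nu_P; apply: lb_le_inf.
    exists (cost (@c4 R) (@xs R 4 o0)); exists (@xs R 4 o0), (@ls R 4 o0), (@gs R 4 o0 2).
    by split => //; apply: star_P.
  by move=> z [x [l [g [hP ->]]]]; apply: P_lb hP.
lra.
Qed.

Theorem theorem4 (R : realType) :
  (forall (n : nat) (r : 'I_n) (H : nat) (c : 'I_n -> 'I_n -> R),
      (1 <= H)%N -> valid_costs c ->
      nu_A r H c <= nu_P r H c) /\
  (exists (n : nat) (r : 'I_n) (H : nat) (c : 'I_n -> 'I_n -> R),
      [/\ (1 <= H)%N, valid_costs c & nu_A r H c < nu_P r H c]).
Proof.
split; last exact: part2.
by move=> n r H c HH hc; apply: part1.
Qed.
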